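(* Let $\Delta$ be a positive integer, let $$\delta_{\Delta} = \max \left\{\sin \left(\tfrac{\alpha}{2}\right) \cos \left(\Delta \tfrac{\alpha}{2}\right) : 0 < \alpha < \tfrac{2 \pi}{3 \Delta} \right\},$$ and let $\beta \in \bigcup_{a \in \overline{B}(1, \delta_{\Delta})} \frac{1}{a} \overline{B}(1, \delta_{\Delta})$. Then $Z_{\mathrm{Ising}}(G; \beta) \ne 0$ for every graph $G$ with maximum degree at most $\Delta$.
   Context: Graphs are undirected and may have multiple edges or loops. $Z_{\mathrm{Ising}}(G;\beta)=\sum_{\sigma\colon V\to\{0,1\}}\beta^{m(\sigma)}$ with $m(\sigma)$ the number of monochromatic edges of $G=(V,E)$ under $\sigma$. $\overline{B}(x,r)=\{z\in\mathbb{C}:|z-x|\le r\}$, and $\frac1a\overline{B}(1,\delta)=\{w/a: w\in\overline{B}(1,\delta)\}$. *)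

(* Defs.v *)
From HB Require Import structures.
From mathcomp Require Import all_boot all_order all_algebra.
From mathcomp Require Import complex.
From mathcomp Require Import all_classical all_reals.
From mathcomp Require Import trigo.
Set Implicit Arguments. Unset Strict Implicit. Unset Printing Implicit Defensive.
Import Order.TTheory GRing.Theory Num.Theory.
Local Open Scope ring_scope.
Local Open Scope classical_set_scope.

(* A (finite) multigraph with loops: vertex type V, edge type E, and an
   endpoint map sending each edge to its (unordered) pair of endpoints,
   stored as an ordered pair; a loop is an edge e with (ends e).1 = (ends e).2. *)

Definition mdegree (V E : finType) (ends : E -> V * V) (v : V) : nat :=
  (\sum_(e : E) (((ends e).1 == v) + ((ends e).2 == v)))%N.

Definition max_degree_le (V E : finType) (ends : E -> V * V) (D : nat) : Prop :=
  forall v : V, (mdegree ends v <= D)%N.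

Definition mono_edges (V E : finType) (ends : E -> V * V) (sigma : V -> bool) : nat :=
  #|[set e : E | sigma (ends e).1 == sigma (ends e).2]|.

Definition Z_Ising (F : nzRingType) (V E : finType) (ends : E -> V * V) (beta : F) : F :=
  \sum_(sigma : {ffun V -> bool}) beta ^+ (mono_edges ends sigma).

(* delta_Delta = max { sin(a/2) cos(Delta a/2) : 0 < a < 2 pi / (3 Delta) },
   taken as the supremum of that set (it is attained). *)
Definition delta_Delta (R : realType) (D : nat) : R :=
  sup [set sin (a / 2) * cos (D%:R * a / 2) | a in
         [set a : R | 0 < a /\ a < 2 * pi / (3 * D%:R)]].

(* Main.v *)
Require Import Defs.
From HB Require Import structures.
From mathcomp Require Import all_boot all_order all_algebra.
From mathcomp Require Import complex.
From mathcomp Require Import all_classical all_reals.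
From mathcomp Require Import trigo.
From mathcomp Require Import topology normedtype derive.
From mathcomp Require Import ring lra.
Import Order.TTheory GRing.Theory Num.Theory.
Import numFieldNormedType.Exports.
Local Open Scope ring_scope.

Section Theta.
Local Open Scope classical_set_scope.

Lemma contf (R : realType) (D : nat) : continuous (fun t : R => sin (t / 2) * cos (D%:R * t / 2)).
Proof.
move=> x.
apply: cvgM.
  apply: continuous_comp; last exact: continuous_sin.
  by apply: cvgM; [exact: cvg_id| exact: cvg_cst].
apply: continuous_comp; last exact: continuous_cos.
by apply: cvgM; [apply: cvgM; [exact: cvg_cst| exact: cvg_id] | exact: cvg_cst].
Qed.

Lemma theta_ex (R : realType) (D : nat) : (0 < D)%N -> exists th : R,
  [/\ 0 <= th, D%:R * th <= 2 * pi / 3 &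
      delta_Delta R D <= sin (th/2) * cos (D%:R * th / 2)].
Proof.
move=> D0.
have D0r : 0 < D%:R :> R by rewrite ltr0n.
pose b : R := 2 * pi / (3 * D%:R).
have b0 : 0 < b by rewrite /b divr_gt0 ?mulr_gt0 ?pi_gt0 // ltr0n.
have [c cI cmax] := EVT_max (ltW b0) (continuous_subspaceT (@contf R D)).
move: cI; rewrite in_itv /= => /andP[c0 cb].
exists c; split => //.
  have -> : 2 * pi / 3 = D%:R * b by rewrite /b; field; rewrite gt_eqF.
  by rewrite ler_pM2l.
apply: ge_sup.
  exists (sin (b / 2 / 2) * cos (D%:R * (b / 2) / 2)); exists (b / 2) => //.
  split; first by rewrite divr_gt0.
  by rewrite -/b ltr_pdivrMr // ltr_pMr // ltr1n.
move=> y [a [a0 ab] <-].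
apply: cmax; rewrite in_itv /= ltW //= ltW //.
Qed.

End Theta.

Local Open Scope complex_scope.

Section C.
Context {R : realType}.
Definition expi (t : R) : R[i] := (cos t +i* sin t).

Lemma expiD t1 t2 : expi (t1 + t2) = expi t1 * expi t2.
Proof. rewrite /expi cosD sinD; simpc; congr (_ +i* _); ring. Qed.

Lemma expi0 : expi 0 = 1.
Proof. by rewrite /expi cos0 sin0. Qed.

Lemma normexpi t : `|expi t| = 1.
Proof. rewrite normc_def /= cos2Dsin2 sqrtr1 //. Qed.

Lemma expi_neq0 t : expi t != 0.
Proof. by rewrite -normr_eq0 normexpi oner_eq0. Qed.

Definition Sec (psi : R) (r : R[i]) :=
  exists s t, 0 < s /\ `|t| <= psi /\ r = s%:C * expi t.

Lemma Sec_mul a b r1 r2 : Sec a r1 -> Sec b r2 -> Sec (a + b) (r1 * r2).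
Proof.
move=> [s1 [t1 [s10 [t1a ->]]]] [s2 [t2 [s20 [t2b ->]]]].
exists (s1 * s2), (t1 + t2); split; first exact: mulr_gt0.
split; first by apply: le_trans (ler_normD _ _) _; exact: lerD.
by rewrite expiD rmorphM /=; ring.
Qed.

Lemma Sec_mono a b r : a <= b -> Sec a r -> Sec b r.
Proof.
move=> ab [s [t [s0 [ta ->]]]]; exists s, t; split => //; split => //.
exact: le_trans ab.
Qed.

Lemma Sec1 : Sec 0 1.
Proof. by exists 1, 0; rewrite expi0 normr0 mulr1; split. Qed.

Lemma normSec a r : Sec a r -> exists s, 0 < s /\ `|r| = s%:C.
Proof.
move=> [s [t [s0 [ta ->]]]]; exists s; split => //.
by rewrite normrM normexpi mulr1 ger0_norm // ler0c ltW.
Qed.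

Lemma Sec_neq0 a r : Sec a r -> r != 0.
Proof.
move=> /normSec [s [s0 e]]; rewrite -normr_eq0 e.
by apply/eqP => -[] /eqP; rewrite gt_eqF.
Qed.

Lemma cos_le_abs (t psi : R) : `|t| <= psi -> psi <= pi -> cos psi <= cos t.
Proof.
move=> tp ppi.
have p0 : 0 <= psi by apply: le_trans tp.
rewrite -(cos_norm t) leNgt ltr_cos ?in_itv /= ?normr_ge0 ?p0 ?ppi //.
  by rewrite -leNgt.
by rewrite (le_trans tp).
Qed.

Lemma L1 (psi : R) r : psi <= pi -> Sec psi r ->
  (cos (psi / 2))%:C * (1 + `|r|) <= `|1 + r|.
Proof.
move=> ppi Hr; have [s [t [s0 [tp re]]]] := Hr.
have -> : `|r| = s%:C by rewrite re normrM normexpi mulr1 ger0_norm ?ler0c ?(ltW s0).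
have p0 : 0 <= psi by apply: le_trans tp.
have ct := cos_le_abs _ _ tp ppi.
have c0 : 0 <= cos (psi / 2).
  by apply: cos_ge0_pihalf; apply/andP; split; lra.
have cpsi : cos psi = cos (psi / 2) ^+ 2 *+ 2 - 1.
  by rewrite -cos_mulr2n; congr cos; rewrite mulr2n; field.
rewrite re /expi normc_def /=.
have -> : (cos (psi/2))%:C * (1 + s%:C) = (cos (psi/2) * (1+s))%:C.
  by rewrite rmorphM rmorphD rmorph1.
rewrite lecR !mul0r subr0 add0r addr0.
have h : (cos (psi / 2) * (1 + s))^+2 <= (1 + s * cos t) ^+ 2 + (s * sin t) ^+ 2.
  have e2 := cos2Dsin2 t; have c1 := cos_le1 (psi / 2).
  have cg := cos_geN1 (psi / 2).
  have -> : (1 + s * cos t) ^+ 2 + (s * sin t) ^+ 2 = 1 + 2 * s * cos t + s ^+ 2 * (cos t ^+ 2 + sin t ^+ 2) by ring.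
  rewrite e2 mulr1.
  have h1 : 0 <= s * (cos t - cos psi) by apply: mulr_ge0; lra.
  have h2 : 0 <= (1 - s) ^+ 2 * (1 - cos (psi / 2) ^+ 2).
    apply: mulr_ge0; first exact: sqr_ge0.
    rewrite subr_ge0; nra.
  rewrite cpsi in h1.
  nra.
rewrite -(ger0_norm (mulr_ge0 c0 (addr_ge0 ler01 (ltW s0)))) -sqrtr_sqr.
by rewrite ler_sqrt // addr_ge0 ?sqr_ge0.
Qed.

Lemma polar (phi : R) u : 0 <= phi -> phi < pi / 2 -> `|u - 1| <= (sin phi)%:C ->
  exists s t, 0 < s /\ `|t| <= phi /\ u = s%:C * expi t.
Proof.
move=> p0 ppi; case: u => x y.
rewrite normc_def /= lecR => hs.
have pi0 : 0 < pi :> R := pi_gt0 R.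
have c0 : 0 < cos phi by apply: cos_gt0_pihalf; apply/andP; split; lra.
have s0 : 0 <= sin phi by apply: sin_ge0_pi; apply/andP; split; lra.
have sc := cos2Dsin2 phi.
set X := _ + _ in hs.
have X0 : 0 <= X by rewrite /X addr_ge0 ?sqr_ge0.
have sq := sqr_sqrtr X0.
have sq0 := sqrtr_ge0 X.
have hX : X <= sin phi ^+ 2 by nra.
rewrite /X in hX.
have hX' : (x - 1) ^+ 2 + y ^+ 2 <= sin phi ^+ 2.
  by move: hX; rewrite subr0.
have x0 : 0 < x by nra.
have k1 : (cos phi * y) ^+ 2 <= (sin phi * x) ^+ 2.
  have e : (sin phi * x) ^+ 2 - cos phi ^+ 2 * (sin phi ^+ 2 - (x - 1) ^+ 2)
           = (x - cos phi ^+ 2) ^+ 2.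
    rewrite exprMn; have -> : sin phi ^+ 2 = 1 - cos phi ^+ 2 by lra.
    ring.
  have : 0 <= (x - cos phi ^+ 2) ^+ 2 := sqr_ge0 _.
  rewrite -e => h.
  have : cos phi ^+ 2 * y ^+ 2 <= cos phi ^+ 2 * (sin phi ^+ 2 - (x - 1) ^+ 2).
    by apply: ler_wpM2l; [exact: sqr_ge0 | lra].
  rewrite exprMn; lra.
have sx0 : 0 <= sin phi * x by apply: mulr_ge0 => //; exact: ltW.
have k2 : cos phi * y <= sin phi * x by nra.
have k3 : - (sin phi * x) <= cos phi * y by nra.
set t := atan (y / x).
have ht1 := atan_gtNpi2 (y / x).
have ht2 := atan_ltpi2 (y / x).
have ct : 0 < cos t by apply: cos_gt0_pihalf; apply/andP; split.
have phiI : phi \in `](- (pi / 2)), (pi / 2)[ by rewrite in_itv /=; apply/andP; split; lra.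
have phiNI : - phi \in `](- (pi / 2)), (pi / 2)[ by rewrite in_itv /=; apply/andP; split; lra.
exists (x / cos t), t; split; first by apply: divr_gt0.
split.
  rewrite ler_norml; apply/andP; split.
    rewrite -(tanK phiNI) /t; apply: le_atan.
    rewrite tanN /tan.
    have -> : - (sin phi / cos phi) = (- (sin phi * x)) / (cos phi * x) by field; rewrite !gt_eqF.
    have -> : y / x = (cos phi * y) / (cos phi * x) by field; rewrite !gt_eqF.
    by apply: ler_wpM2r => //; rewrite invr_ge0 ltW // mulr_gt0.
  rewrite -(tanK phiI) /t; apply: le_atan.
  rewrite /tan.
  have -> : (sin phi / cos phi) = (sin phi * x) / (cos phi * x) by field; rewrite !gt_eqF.
  have -> : y / x = (cos phi * y) / (cos phi * x) by field; rewrite !gt_eqF.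
  by apply: ler_wpM2r => //; rewrite invr_ge0 ltW // mulr_gt0.
apply/eqP; rewrite eq_complex /=; apply/andP; split; apply/eqP.
  by rewrite mul0r subr0 mulrVK // unitfE gt_eqF.
rewrite mul0r addr0 -mulrA [_^-1 * _]mulrC -/(tan t) /t atanK.
by rewrite mulrC mulrVK // unitfE gt_eqF.
Qed.

Lemma L3 (phi : R) u1 u2 : 0 <= phi -> phi < pi / 2 ->
  `|u1 - 1| <= (sin phi)%:C -> `|u2 - 1| <= (sin phi)%:C -> Sec (phi + phi) (u2 / u1).
Proof.
move=> p0 ppi h1 h2.
have [s1 [t1 [s10 [t1p ->]]]] := polar _ _ p0 ppi h1.
have [s2 [t2 [s20 [t2p ->]]]] := polar _ _ p0 ppi h2.
exists (s2 / s1), (t2 - t1); split; first exact: divr_gt0.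
split; first by apply: le_trans (ler_normB _ _) _; rewrite addrC; exact: lerD.
have -> : expi t2 = expi (t2 - t1) * expi t1 by rewrite -expiD subrK.
have e1 := expi_neq0 t1.
have s1C : s1%:C != 0 by apply/eqP => -[] /eqP; rewrite gt_eqF.
rewrite rmorphM fmorphV /=.
by field; rewrite s1C e1.
Qed.

Lemma comb (th psi del : R) (Y0 Y1 r p0 p1 q0 q1 : R[i]) :
 0 <= th -> th < pi -> psi <= pi -> 0 < cos (psi / 2) ->
 del <= sin (th / 2) * cos (psi / 2) ->
 Y0 != 0 -> Sec psi r -> Y1 = r * Y0 ->
 `|p0 - 1| <= del%:C -> `|p1 - 1| <= del%:C ->
 `|q0 - 1| <= del%:C -> `|q1 - 1| <= del%:C ->
 exists r', Sec th r' /\ p0 * Y0 + p1 * Y1 = r' * (q0 * Y0 + q1 * Y1).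
Proof.
move=> th0 thpi ppi c0 hdel Y00 Hr eY1 hp0 hp1 hq0 hq1.
have pi0 : 0 < pi :> R := pi_gt0 R.
set S := Y0 + Y1.
set c := cos (psi / 2).
set rho := sin (th / 2).
have rho0 : 0 <= rho by apply: sin_ge0_pi; apply/andP; split; lra.
have ct : 0 < cos (th / 2) by apply: cos_gt0_pihalf; apply/andP; split; lra.
have rho1 : rho < 1.
  have e := cos2Dsin2 (th / 2); rewrite -/rho in e; nra.
have hS : c%:C * (`|Y0| + `|Y1|) <= `|S|.
  have -> : S = (1 + r) * Y0 by rewrite /S eY1; ring.
  rewrite eY1 !normrM -{1}(mul1r `|Y0|) -mulrDl mulrA.
  by apply: ler_wpM2r; [exact: normr_ge0 | exact: L1].
have Y0p : 0 < `|Y0| by rewrite normr_gt0.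
have Mp : 0 < `|Y0| + `|Y1| by apply: (lt_le_trans Y0p); rewrite lerDl normr_ge0.
have cC : 0 < c%:C by rewrite ltcR.
have Sp : 0 < `|S| by apply: lt_le_trans hS; exact: mulr_gt0.
have S0 : S != 0 by rewrite -normr_gt0.
have B : forall a0 a1, `|a0 - 1| <= del%:C -> `|a1 - 1| <= del%:C ->
    `|(a0 * Y0 + a1 * Y1) / S - 1| <= rho%:C.
  move=> a0 a1 ha0 ha1.
  have -> : (a0 * Y0 + a1 * Y1) / S - 1 = ((a0 - 1) * Y0 + (a1 - 1) * Y1) / S.
    by rewrite /S; field; rewrite -/S S0.
  rewrite normrM normfV ler_pdivrMr //.
  apply: le_trans (ler_normD _ _) _.
  rewrite !normrM.
  have h1 : `|a0 - 1| * `|Y0| + `|a1 - 1| * `|Y1| <= del%:C * (`|Y0| + `|Y1|).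
    rewrite mulrDr; apply: lerD; apply: ler_wpM2r => //; exact: normr_ge0.
  apply: le_trans h1 _.
  have h2 : del%:C <= rho%:C * c%:C by rewrite -rmorphM lecR.
  apply: le_trans (ler_wpM2r (ltW Mp) h2) _.
  rewrite -mulrA; apply: ler_wpM2l => //; by rewrite ler0c.
have hth : th / 2 < pi / 2 by lra.
have th20 : 0 <= th / 2 by lra.
have := L3 _ _ _ th20 hth (B _ _ hq0 hq1) (B _ _ hp0 hp1).
have -> : th / 2 + th / 2 = th by field.
move=> HS.
set uQ := (q0 * Y0 + q1 * Y1) / S in HS *.
set uP := (p0 * Y0 + p1 * Y1) / S in HS *.
have uQ0 : uQ != 0.
  apply/eqP => e; have := B _ _ hq0 hq1; rewrite -/uQ e sub0r normrN normr1.
  by rewrite -[1]/(1%:C) lecR; lra.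
exists (uP / uQ); split => //.
have qY0 : q0 * Y0 + q1 * Y1 != 0.
  by apply/eqP => e; move: uQ0; rewrite /uQ e mul0r eqxx.
rewrite /uP /uQ; field; rewrite S0 qY0 //.
Qed.

End C.
Arguments comb {R th psi del Y0 Y1 r p0 p1 q0 q1}.
Arguments L3 {R phi u1 u2}.
Arguments L1 {R psi r}.
Arguments polar {R phi u}.


Section Comb.
Context {R : realType} {V E : finType} (ends : E -> V * V).
Local Notation C := (R[i]).
Implicit Types (A B : E -> bool -> bool -> C) (F : {set V}) (tau : V -> bool).

Definition W A (sg : V -> bool) : C :=
  \prod_(e : E) A e (sg (ends e).1) (sg (ends e).2).
Definition agree F tau (sg : {ffun V -> bool}) :=
  [forall w, (w \notin F) ==> (sg w == tau w)].
Definition Z A F tau : C := \sum_(sg : {ffun V -> bool} | agree F tau sg) W A sg.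
Definition upd tau v b := fun w => if w == v then b else tau w.
Definition kill A e := fun e' x y => if e' == e then 1 else A e' x y.
Definition mod1 v e A := fun e' x y => if e' == e then
   A e (if (ends e).1 == v then true else x) (if (ends e).2 == v then true else y)
   else A e' x y.
Definition modS v s A := foldr (mod1 v) A s.

Lemma Z_ext A B F tau : (forall e x y, A e x y = B e x y) -> Z A F tau = Z B F tau.
Proof. by move=> h; apply: eq_bigr => sg _; apply: eq_bigr => e _; exact: h. Qed.

Lemma agree_split F tau v b (sg : {ffun V -> bool}) : v \in F ->
  (agree F tau sg && (sg v == b)) = agree (F :\ v) (upd tau v b) sg.
Proof.
move=> vF; rewrite /agree /upd; apply/idP/idP.
  move=> /andP[/forallP h /eqP nv]; apply/forallP => w; rewrite in_setD1 negb_and negbK.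
  case: (eqVneq w v) => [->|wv] /=; first by rewrite nv.
  exact: h.
move=> /forallP h; apply/andP; split.
  apply/forallP => w; apply/implyP => wF.
  case: (eqVneq w v) => [ewv|wv]; first by rewrite ewv vF in wF.
  by have := h w; rewrite in_setD1 wv wF /= (negbTE wv).
by have := h v; rewrite in_setD1 eqxx /=.
Qed.

Lemma Z_split A F tau v : v \in F ->
  Z A F tau = Z A (F :\ v) (upd tau v false) + Z A (F :\ v) (upd tau v true).
Proof.
move=> vF; rewrite /Z (bigID (fun sg : {ffun V -> bool} => sg v)) /= addrC.
congr (_ + _); apply: eq_bigl => sg.
  by rewrite -agree_split // eqbF_neg.
by rewrite -agree_split // eqb_id.
Qed.

Lemma Z_const A F tau e : (ends e).1 \notin F -> (ends e).2 \notin F ->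
  Z A F tau = A e (tau (ends e).1) (tau (ends e).2) * Z (kill A e) F tau.
Proof.
move=> h1 h2; rewrite /Z mulr_sumr; apply: eq_bigr => sg /forallP ag.
rewrite /W (bigD1 e) //= [in RHS](bigD1 e) //= /kill eqxx mul1r.
have /implyP/(_ h1)/eqP -> := ag (ends e).1.
have /implyP/(_ h2)/eqP -> := ag (ends e).2.
congr (_ * _); apply: eq_bigr => e' /negbTE -> //.
Qed.

Lemma Z_set0 A tau : Z A (@finset.set0 V) tau = W A [ffun w => tau w].
Proof.
rewrite /Z (big_pred1 [ffun w => tau w]) // => sg /=.
apply/forallP/eqP => [h|->]; last by move=> w; rewrite ffunE eqxx implybT.
by apply/ffunP => w; rewrite ffunE; have := h w; rewrite finset.in_set0 /= => /eqP.
Qed.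

Lemma modS_eval v s A e x y : modS v s A e x y =
  if e \in s then A e (if (ends e).1 == v then true else x)
                      (if (ends e).2 == v then true else y)
  else A e x y.
Proof.
elim: s e x y => [|a s IH] e x y //=.
rewrite /mod1 in_cons; case: (eqVneq e a) => [->|ea] /=.
  rewrite IH; case: ifP => _ //.
  by case: ((ends a).1 == v); case: ((ends a).2 == v).
exact: IH.
Qed.

End Comb.
Arguments Z_ext {R V E ends} A B F tau _.
Arguments Z_split {R V E ends} A F tau v _.
Arguments Z_const {R V E ends} A F tau e _ _.
Arguments Z_set0 {R V E ends} A tau.
Arguments modS_eval {R V E ends} v s A e x y.

Section Main.
Variables (R : realType) (V E : finType) (ends : E -> V * V).
Variables (D : nat) (th del : R).
Hypothesis D0 : (0 < D)%N.
Hypothesis th0 : 0 <= th.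
Hypothesis hD : D%:R * th <= 2 * pi / 3.
Hypothesis del0 : 0 <= del.
Hypothesis hdel : del <= sin (th / 2) * cos (D%:R * th / 2).
Hypothesis deg : max_degree_le ends D.
Local Notation C := (R[i]).
Local Notation psi := (D%:R * th).
Implicit Types (A B : E -> bool -> bool -> C) (F : {set V}) (tau : V -> bool).

Definition valid A := forall e x y, `|A e x y - 1| <= del%:C.

Let pi0 : 0 < pi :> R := pi_gt0 R.
Let thpsi : th <= psi.
Proof. by rewrite -{1}(mul1r th) ler_wpM2r // ler1n. Qed.
Let thpi : th < pi.
Proof. have := thpsi; have := pi0; have := hD; lra. Qed.
Let psipi : psi <= pi.
Proof. have := pi0; have := hD; lra. Qed.
Let psi0 : 0 <= psi.
Proof. by apply: mulr_ge0. Qed.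
Let cpsi0 : 0 < cos (psi / 2).
Proof. have := psi0; have := hD; have := pi0 => ? ? ?; by apply: cos_gt0_pihalf; apply/andP; split; lra. Qed.
Let rho1 : sin (th / 2) < 1.
Proof.
have := thpi; have := pi0; have := th0 => ? ? ?.
have ct : 0 < cos (th / 2) by apply: cos_gt0_pihalf; apply/andP; split; lra.
have e := cos2Dsin2 (th / 2); nra.
Qed.
Let del1 : del < 1.
Proof.
have := thpi; have := pi0; have := th0 => ? ? ?.
have s0 : 0 <= sin (th / 2) by apply: sin_ge0_pi; apply/andP; split; lra.
have := rho1; have := hdel; have := cpsi0; have := cos_le1 (psi / 2); nra.
Qed.
Let delsin : del <= sin (th / 2).
Proof.
have := thpi; have := pi0; have := th0 => ? ? ?.
have s0 : 0 <= sin (th / 2) by apply: sin_ge0_pi; apply/andP; split; lra.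
have := rho1; have := hdel; have := cpsi0; have := cos_le1 (psi / 2); nra.
Qed.

Lemma neq0_of_ball (a : C) : `|a - 1| <= del%:C -> a != 0.
Proof.
move=> h; apply/eqP => e; move: h; rewrite e sub0r normrN normr1.
by rewrite -[1]/(1%:C) lecR; have := del1; lra.
Qed.

Lemma valid_kill A e : valid A -> valid (kill A e).
Proof.
move=> h e' x y; rewrite /kill; case: ifP => _; last exact: h.
by rewrite subrr normr0 ler0c.
Qed.

Lemma valid_mod1 A v e : valid A -> valid (mod1 ends v e A).
Proof. by move=> h e' x y; rewrite /mod1; case: ifP => _; exact: h. Qed.

Lemma valid_modS A v s : valid A -> valid (modS ends v s A).
Proof. by move=> h; elim: s => [|a s IH] //=; exact: valid_mod1. Qed.

Lemma W_neq0 A sg : valid A -> W ends A sg != 0.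
Proof. by move=> h; apply/prodf_neq0 => e _; exact: neq0_of_ball. Qed.

Definition Prop_ind m := forall A F tau, valid A -> (#|F| <= m)%N ->
  Z ends A F tau != 0 /\ (forall u, u \in F -> exists r, Sec psi r /\
    Z ends A (F :\ u) (upd tau u true) = r * Z ends A (F :\ u) (upd tau u false)).

Lemma step m : Prop_ind m -> forall A F tau v e, valid A -> (#|F| <= m)%N ->
  v \notin F -> ((ends e).1 == v) || ((ends e).2 == v) ->
  exists r, Sec th r /\ Z ends (mod1 ends v e A) F tau = r * Z ends A F tau.
Proof.
move=> IH A F tau v e vA Fm vF inc.
set p := (ends e).1; set q := (ends e).2.
set u := if p == v then q else p.
have pq : forall w, (w == p) || (w == q) -> (w == v) || (w == u).
  move=> w; rewrite /u; move: inc; rewrite -/p -/q.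
  case: (eqVneq p v) => [pv|pv] /= inc'.
    by rewrite -pv; case/orP => ->; rewrite ?orbT.
  by case/orP => /eqP ->; rewrite ?eqxx ?inc' ?orbT.
have km : forall e' x y, kill (mod1 ends v e A) e e' x y = kill A e e' x y.
  by move=> e' x y; rewrite /kill /mod1; case: ifP => // ->.
have vmA := valid_mod1 A v e vA.
case: (boolP (u \in F)) => uF.
  pose F' := F :\ u.
  have nF' : forall w, (w == p) || (w == q) -> w \notin F'.
    move=> w /pq /orP[] /eqP ->; rewrite in_setD1 negb_and ?eqxx //.
    by rewrite vF orbT.
  have pF' : p \notin F' by apply: nF'; rewrite eqxx.
  have qF' : q \notin F' by apply: nF'; rewrite eqxx orbT.
  rewrite (Z_split _ _ _ _ uF) [Z _ A _ _](Z_split _ _ _ _ uF).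
  rewrite (Z_const (mod1 ends v e A) F' (upd tau u false) e pF' qF').
  rewrite (Z_const (mod1 ends v e A) F' (upd tau u true) e pF' qF').
  rewrite (Z_const A F' (upd tau u false) e pF' qF').
  rewrite (Z_const A F' (upd tau u true) e pF' qF').
  rewrite !(Z_ext _ _ _ _ km).
  have vkA := valid_kill A e vA.
  have [_ /(_ u uF) [r [Hr eY1]]] := IH _ F tau vkA Fm.
  have F'm : (#|F'| <= m)%N.
    by apply: leq_trans Fm; rewrite (cardsD1 u F) uF.
  have [Y00 _] := IH _ F' (upd tau u false) vkA F'm.
  apply: (comb th0 thpi psipi cpsi0 hdel Y00 Hr eY1); by [apply: vmA | apply: vA].
have pF : p \notin F by have := pq p; rewrite eqxx => /(_ isT) /orP[] /eqP ->.
have qF : q \notin F by have := pq q; rewrite eqxx orbT => /(_ isT) /orP[] /eqP ->.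
rewrite (Z_const (mod1 ends v e A) F tau e pF qF) (Z_const A F tau e pF qF) (Z_ext _ _ _ _ km).
set c' := mod1 _ _ _ _ _ _ _; set c := A e _ _.
have hc : `|c - 1| <= (sin (th / 2))%:C by apply: le_trans (vA _ _ _) _; rewrite lecR.
have hc' : `|c' - 1| <= (sin (th / 2))%:C by apply: le_trans (vmA _ _ _) _; rewrite lecR.
have := th0; have := thpi; have := pi0 => ? ? ?.
have th20 : 0 <= th / 2 by lra.
have th2 : th / 2 < pi / 2 by lra.
have := L3 th20 th2 hc hc'; rewrite -splitr => HS.
exists (c' / c); split => //.
have c0 : c != 0 := neq0_of_ball _ (vA _ _ _).
by rewrite mulrA divfK.
Qed.

Lemma chain m : Prop_ind m -> forall A F tau v s, valid A -> (#|F| <= m)%N ->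
  v \notin F -> all (fun e => ((ends e).1 == v) || ((ends e).2 == v)) s ->
  exists r, Sec ((size s)%:R * th) r /\
    Z ends (modS ends v s A) F tau = r * Z ends A F tau.
Proof.
move=> IH A F tau v s vA Fm vF; elim: s => [|a s IHs] /=.
  by move=> _; exists 1; rewrite mul0r mul1r; split => //; exact: Sec1.
move=> /andP[ia /IHs [r2 [H2 e2]]].
have [r1 [H1 e1]] := step m IH (modS ends v s A) F tau v a (valid_modS A v s vA) Fm vF ia.
exists (r1 * r2); split.
  have -> : (size s).+1%:R * th = th + (size s)%:R * th.
    by rewrite -add1n natrD mulrDl mul1r.
  exact: Sec_mul.
by rewrite e1 e2 mulrA.
Qed.

Definition flipv (v : V) (sg : {ffun V -> bool}) : {ffun V -> bool} :=
  [ffun w => if w == v then ~~ sg w else sg w].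

Lemma flipvK v : involutive (flipv v).
Proof.
move=> sg; apply/ffunP => w; rewrite !ffunE.
by case: (eqVneq w v) => //= ->; rewrite negbK.
Qed.

Definition inc (v : V) := [pred e | ((ends e).1 == v) || ((ends e).2 == v)].

Lemma final A F tau v : v \notin F ->
  Z ends A F (upd tau v true) = Z ends (modS ends v (enum (inc v)) A) F (upd tau v false).
Proof.
move=> vF; rewrite /Z (reindex_inj (inv_inj (flipvK v))) /=.
apply: eq_big => sg.
  rewrite /agree; apply/forallP/forallP => h w; have := h w;
    rewrite /upd ffunE; case: (eqVneq w v) => [->|wv] //=; rewrite vF /=;
    by case: (sg v).
move=> ag; rewrite /W; apply: eq_bigr => e _; rewrite modS_eval mem_enum /inc /=.
have sv : sg v = false.
  by move/forallP: ag => /(_ v); rewrite vF /upd ffunE !eqxx /=; case: (sg v).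
rewrite !ffunE inE.
case: (eqVneq (ends e).1 v) => [e1|e1]; case: (eqVneq (ends e).2 v) => [e2|e2] /=;
  by rewrite ?e1 ?e2 ?eqxx ?sv.
Qed.

Lemma card_inc u : (#|inc u| <= mdegree ends u)%N.
Proof.
rewrite -sum1_card /mdegree big_mkcond /=; apply: leq_sum => e _.
by rewrite /inc inE; case: ((ends e).1 == u); case: ((ends e).2 == u).
Qed.

Lemma main n : Prop_ind n.
Proof.
elim: n => [|n IH] A F tau vA Fn.
  have F0 : F = finset.set0 by apply: cards0_eq; apply/eqP; rewrite -leqn0.
  subst; split; first by rewrite Z_set0 W_neq0.
  by move=> u; rewrite finset.in_set0.
have ratio : forall u, u \in F -> exists r, Sec psi r /\
    Z ends A (F :\ u) (upd tau u true) = r * Z ends A (F :\ u) (upd tau u false).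
  move=> u uF.
  have F'n : (#|F :\ u| <= n)%N by move: Fn; rewrite (cardsD1 u F) uF.
  have uF' : u \notin F :\ u by rewrite in_setD1 eqxx.
  have alls : all (fun e => ((ends e).1 == u) || ((ends e).2 == u)) (enum (inc u)).
    by apply/allP => e; rewrite mem_enum.
  have [r [Hr er]] := chain n IH A (F :\ u) (upd tau u false) u (enum (inc u)) vA F'n uF' alls.
  exists r; split; last by rewrite final.
  apply: Sec_mono Hr; apply: ler_wpM2r => //.
  rewrite ler_nat -cardE; apply: leq_trans (card_inc u) _; exact: deg.
split => //.
case: (set_0Vmem F) => [F0|[u uF]].
  by rewrite F0 Z_set0 W_neq0.
have [r [Hr er]] := ratio u uF.
have F'n : (#|F :\ u| <= n)%N by move: Fn; rewrite (cardsD1 u F) uF.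
have [Z0 _] := IH A (F :\ u) (upd tau u false) vA F'n.
rewrite (Z_split _ _ _ _ uF) er -{1}(mul1r (Z _ _ _ (upd tau u false))) -mulrDl mulf_neq0 //.
rewrite -normr_gt0; apply: lt_le_trans (L1 psipi Hr).
apply: mulr_gt0; first by rewrite ltcR.
by apply: (lt_le_trans ltr01); rewrite lerDl normr_ge0.
Qed.

Lemma del_lt1 : del < 1.
Proof. exact: del1. Qed.

End Main.


Theorem corollary2p8 (R : realType) (D : nat) (beta : R[i]) :
  (0 < D)%N ->
  (exists a : R[i], `|a - 1| <= (delta_Delta R D)%:C /\
     exists w : R[i], `|w - 1| <= (delta_Delta R D)%:C /\ beta = w / a) ->
  forall (V E : finType) (ends : E -> V * V),
    max_degree_le ends D -> Z_Ising ends beta != 0.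
Proof.
move=> D0 [a [ha [w [hw ->]]]] V E ends deg.
have [th [th0 hD hdel]] := theta_ex R D D0.
set del := delta_Delta R D in ha hw hdel.
have del0 : 0 <= del by rewrite -ler0c; exact: le_trans (normr_ge0 _) ha.
have d1 := @del_lt1 R D th del D0 th0 hD hdel.
have a0 : a != 0.
  apply/eqP => e; move: ha; rewrite e sub0r normrN normr1 -[1]/(1%:C) lecR; lra.
pose A := fun (e : E) (x y : bool) => if x == y then w else a.
have vA : forall e x y, `|A e x y - 1| <= del%:C by move=> e x y; rewrite /A; case: ifP.
have [Z0 _] := @main R V E ends D th del D0 th0 hD del0 hdel deg (#|[set: V]|) A [set: V] (fun _ => false) vA (leqnn _).
have eZ : Z ends A [set: V] (fun _ => false) = a ^+ #|E| * Z_Ising ends (w / a).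
  rewrite /Z /Z_Ising mulr_sumr.
  have -> : \sum_(sg : {ffun V -> bool} | agree [set: V] (fun _ => false) sg) W ends A sg
          = \sum_(sg : {ffun V -> bool}) W ends A sg.
    by apply: eq_bigl => sg; apply/forallP => v; rewrite finset.in_setT.
  apply: eq_bigr => sg _.
  rewrite /W /mono_edges.
  have -> : \prod_(e : E) A e (sg (ends e).1) (sg (ends e).2)
      = \prod_(e : E) (a * (if sg (ends e).1 == sg (ends e).2 then w / a else 1)).
    apply: eq_bigr => e _; rewrite /A; case: ifP => _; last by rewrite mulr1.
    by rewrite mulrC divfK.
  rewrite big_split /= prodr_const cardT -cardE; congr (_ * _).
  rewrite -big_mkcond /= -prodr_const; apply: eq_bigl => e; by rewrite unfold_in /= asboolb.
apply/eqP => eI; move: Z0; rewrite eZ eI mulr0 eqxx //.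
Qed.
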